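(* Let $n$ be a positive integer, let $L/K_P$ be a finite extension, and let $\alpha\in K_P^+$ satisfy $v_L(\alpha)\in n\mathbb{Z}$. Then there exists a finite purely inseparable extension $L_1/L$ such that the unique $n$-th root $\alpha^{1/n}\in\mathbb{C}_P^+$ lies in $L_1^+$.
   Context: $X$ is a smooth projective curve over a finite field of characteristic $p$, $P$ a closed point, $K_P$ the completion of its function field at $P$, $\mathbb{C}_P$ the completion of an algebraic closure of $K_P$; all extensions of $K_P$ lie in $\mathbb{C}_P$. For a complete extension $L$ of $K_P$, $\mu_L$ denotes the roots of unity in $L$ and $L^+=L^\times/\mu_L$ is the group of positive numbers; for $L'\subseteq L$ one has $L'^+\subseteq L^+\subseteq\mathbb{C}_P^+$. The group $\mathbb{C}_P^+$ is uniquely divisible. For $L/K_P$ finite, $v_L=e_{L/K_P}v_P$ is the normalized valuation of $L$ (extended to $\mathbb{C}_P$), which is well defined on positive numbers. *)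

(* Defs.v *)
From HB Require Import structures.
From mathcomp Require Import all_boot all_order all_algebra.
Set Implicit Arguments. Unset Strict Implicit. Unset Printing Implicit Defensive.
Import Order.TTheory GRing.Theory Num.Theory.
Local Open Scope ring_scope.

Section Defs.
Variable C : fieldType.

Definition is_subfield (S : C -> Prop) : Prop :=
  [/\ S 0, S 1,
      (forall x y, S x -> S y -> S (x - y)),
      (forall x y, S x -> S y -> S (x * y)) &
      (forall x, S x -> S x^-1)].

Definition is_valuation (v : C -> rat) : Prop :=
  (forall x y, x != 0 -> y != 0 -> v (x * y) = v x + v y) /\
  (forall x y, x != 0 -> y != 0 -> x + y != 0 -> Num.min (v x) (v y) <= v (x + y)).

Definition close (v : C -> rat) (N : nat) (x y : C) : Prop :=
  x = y \/ N%:R <= v (x - y).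

Definition cauchy_seq (v : C -> rat) (a : nat -> C) : Prop :=
  forall N : nat, exists M : nat, forall i j, (M <= i)%N -> (M <= j)%N ->
    close v N (a i) (a j).

Definition converges_to (v : C -> rat) (a : nat -> C) (l : C) : Prop :=
  forall N : nat, exists M : nat, forall i, (M <= i)%N -> close v N (a i) l.

Definition integral_in (v : C -> rat) (K : C -> Prop) (x : C) : Prop :=
  K x /\ (x = 0 \/ 0 <= v x).

(* The local setting: K is a complete discretely valued field of
   characteristic p with normalized valuation v|K and finite residue field,
   inside the algebraically closed valued field (C, v). *)
Definition local_setting (p : nat) (v : C -> rat) (K : C -> Prop) : Prop :=
  [/\ prime p, p%:R = 0 :> C, is_valuation v & is_subfield K] /\
  [/\ (forall x, K x -> x != 0 -> exists z : int, v x = z%:~R),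
      (exists pi, K pi /\ pi != 0 /\ v pi = 1),
      (forall a : nat -> C, (forall i, K (a i)) -> cauchy_seq v a ->
          exists2 l, K l & converges_to v a l) &
      (exists s : seq C, (forall y, y \in s -> integral_in v K y) /\
          forall x, integral_in v K x ->
            exists2 y, y \in s & (x - y = 0 \/ 0 < v (x - y)))].

Definition finite_ext (F E : C -> Prop) : Prop :=
  [/\ is_subfield E, (forall x, F x -> E x) &
      exists b : seq C, (forall y, y \in b -> E y) /\
        forall x, E x -> exists c : nat -> C, (forall i, F (c i)) /\
          x = \sum_(i < size b) c i * b`_i].

Definition purely_insep (p : nat) (F E : C -> Prop) : Prop :=
  forall x, E x -> exists k : nat, F (x ^+ (p ^ k)).

(* e = e_{L/K}: v(L^x) = (1/e) Z, i.e. v_L = e * v_P *)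
Definition ram_index (v : C -> rat) (L : C -> Prop) (e : nat) : Prop :=
  (0 < e)%N /\
  (forall x, L x -> x != 0 -> exists z : int, e%:R * v x = z%:~R) /\
  (exists x, L x /\ x != 0 /\ e%:R * v x = 1).

(* equality of the classes of x, y in C^+ = C^x / mu_C *)
Definition pos_eq (x y : C) : Prop :=
  exists m : nat, (0 < m)%N /\ (x / y) ^+ m = 1.

End Defs.

(* Main.v *)
Require Import Defs.
From HB Require Import structures.
From mathcomp Require Import all_boot all_order all_algebra.
From mathcomp Require Import cyclic.
From mathcomp Require Import lra ring.
From Stdlib Require Import ClassicalEpsilon Classical.
Set Implicit Arguments. Unset Strict Implicit. Unset Printing Implicit Defensive.
Import Order.TTheory GRing.Theory Num.Theory.
Local Open Scope ring_scope.


Lemma choiceP (A B : Type) (P : A -> B -> Prop) :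
  (forall a, exists b, P a b) -> exists f : A -> B, forall a, P a (f a).
Proof.
move=> H; exists (fun a => proj1_sig (constructive_indefinite_description _ (H a))).
by move=> a; case: (constructive_indefinite_description _ (H a)).
Qed.

Lemma rat_bound (q : rat) : exists n : nat, q <= n%:R.
Proof.
case: (lerP 0 q) => hq.
  by exists (Num.bound q); apply/ltW/archi_boundP.
by exists 0%N; apply/ltW.
Qed.

Lemma fin_bound (P : nat -> nat -> Prop) m :
  (forall i M M', (M <= M')%N -> P i M -> P i M') ->
  (forall i, (i < m)%N -> exists M, P i M) -> exists M, forall i, (i < m)%N -> P i M.
Proof.
move=> mono; elim: m => [|m IH] H; first by exists 0%N.
have [M1 HM1] : exists M, forall i, (i < m)%N -> P i M.
  by apply: IH => i hi; apply: H; apply: ltnW.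
have [M2 HM2] := H m (ltnSn m).
exists (maxn M1 M2) => i; rewrite ltnS leq_eqVlt => /orP [/eqP ->|hi].
  by apply: mono HM2; apply: leq_maxr.
by apply: mono (HM1 i hi); apply: leq_maxl.
Qed.

Lemma pigeon (T : finType) (g : nat -> T) : exists i j, (i < j)%N /\ g i = g j.
Proof.
pose h (i : 'I_(#|T|.+1)) := g i.
have : ~~ injectiveb h.
  apply/negP => /injectiveP /leq_card; rewrite card_ord ltnn //.
move/injectivePn => [x [y hxy hh]].
case: (ltngtP x y) => [lt|lt|eq].
- by exists x, y.
- by exists y, x.
- by move: hxy; rewrite (val_inj eq) eqxx.
Qed.

Section Val.
Variable C : fieldType.
Variable v : C -> rat.
Hypothesis hv : is_valuation v.

Definition ge (N : rat) (x : C) := x = 0 \/ N <= v x.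

Lemma vM x y : x != 0 -> y != 0 -> v (x * y) = v x + v y.
Proof. by case: hv => h _; apply: h. Qed.

Lemma v1 : v 1 = 0.
Proof.
have := vM (oner_neq0 C) (oner_neq0 C); rewrite mulr1 => h.
lra.
Qed.

Lemma vV x : x != 0 -> v x^-1 = - v x.
Proof.
move=> hx; have hx' : x^-1 != 0 by rewrite invr_eq0.
have := vM hx hx'; rewrite divff // v1; lra.
Qed.

Lemma vX x m : x != 0 -> v (x ^+ m) = m%:R * v x.
Proof.
move=> hx; elim: m => [|m IH]; first by rewrite expr0 v1 mul0r.
by rewrite exprS vM ?expf_neq0 // IH mulrSr mulrDl mul1r addrC.
Qed.

Lemma vN x : v (- x) = v x.
Proof.
have h1 : v (-1) = 0.
  have hn1 : (-1 : C) != 0 by rewrite oppr_eq0 oner_neq0.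
  have := vM hn1 hn1; rewrite mulrNN mulr1 v1; lra.
case: (eqVneq x 0) => [->|hx]; first by rewrite oppr0.
by rewrite -mulN1r vM ?oppr_eq0 ?oner_neq0 // h1 add0r.
Qed.

Lemma ge0x N : ge N 0. Proof. by left. Qed.

Lemma ge_le N M x : M <= N -> ge N x -> ge M x.
Proof. by move=> hMN [->|h]; [left|right; apply: le_trans h]. Qed.

Lemma geN N x : ge N x -> ge N (- x).
Proof. by case=> [->|h]; [left; rewrite oppr0|right; rewrite vN]. Qed.

Lemma geD N x y : ge N x -> ge N y -> ge N (x + y).
Proof.
case=> [->|hx]; first by rewrite add0r.
case=> [->|hy]; first by rewrite addr0; right.
case: (eqVneq x 0) => [->|x0]; first by rewrite add0r; right.
case: (eqVneq y 0) => [->|y0]; first by rewrite addr0; right.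
case: (eqVneq (x + y) 0) => [->|xy0]; first by left.
right; case: hv => _ h; apply: le_trans (h _ _ x0 y0 xy0).
by rewrite le_min hx hy.
Qed.

Lemma geB N x y : ge N x -> ge N y -> ge N (x - y).
Proof. by move=> hx hy; apply: geD => //; apply: geN. Qed.

Lemma geM N M x y : ge N x -> ge M y -> ge (N + M) (x * y).
Proof.
case=> [->|hx]; first by rewrite mul0r; left.
case=> [->|hy]; first by rewrite mulr0; left.
case: (eqVneq x 0) => [->|x0]; first by rewrite mul0r; left.
case: (eqVneq y 0) => [->|y0]; first by rewrite mulr0; left.
by right; rewrite vM // lerD.
Qed.

Lemma ge_v x : ge (v x) x. Proof. by right. Qed.

Lemma ge1 : ge 0 1. Proof. by right; rewrite v1. Qed.

Lemma geX N x m : ge N x -> ge (m%:R * N) (x ^+ m).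
Proof.
move=> hx; elim: m => [|m IH]; first by rewrite mul0r expr0; apply: ge1.
by rewrite exprS mulrSr mulrDl mul1r addrC; apply: geM.
Qed.

Lemma ge_sum N m (F : 'I_m -> C) : (forall i, ge N (F i)) -> ge N (\sum_(i < m) F i).
Proof.
move=> H; apply: (big_ind (ge N)) => //; first by left.
by move=> a b; apply: geD.
Qed.

Lemma ge_all x : (forall N : nat, ge N%:R x) -> x = 0.
Proof.
move=> H; case: (eqVneq x 0) => // hx.
have [n hn] := rat_bound (v x).
case: (H n.+1) => // h; exfalso.
have := le_trans h hn; rewrite ler_nat ltnn //.
Qed.

Lemma ge_inv N x : x != 0 -> N <= - v x -> ge N x^-1.
Proof. by move=> hx h; right; rewrite vV. Qed.

Lemma close_ge N x y : close v N x y <-> ge N%:R (x - y).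
Proof.
rewrite /close /ge; split; case=> h; try by right.
  by left; rewrite h subrr.
by left; apply/eqP; rewrite -subr_eq0; apply/eqP.
Qed.

End Val.


Section Sub.
Variable C : fieldType.
Variable K : C -> Prop.
Hypothesis hK : is_subfield K.

Lemma K0 : K 0. Proof. by case: hK. Qed.
Lemma K1 : K 1. Proof. by case: hK. Qed.
Lemma KB x y : K x -> K y -> K (x - y). Proof. by case: hK => _ _ h _ _; apply: h. Qed.
Lemma KM x y : K x -> K y -> K (x * y). Proof. by case: hK => _ _ _ h _; apply: h. Qed.
Lemma KV x : K x -> K x^-1. Proof. by case: hK => _ _ _ _ h; apply: h. Qed.
Lemma KN x : K x -> K (- x). Proof. by move=> h; rewrite -sub0r; apply: KB => //; apply: K0. Qed.
Lemma KD x y : K x -> K y -> K (x + y).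
Proof. by move=> hx hy; rewrite -[y]opprK; apply: KB => //; apply: KN. Qed.
Lemma KX x m : K x -> K (x ^+ m).
Proof. by move=> hx; elim: m => [|m IH]; [rewrite expr0; apply: K1|rewrite exprS; apply: KM]. Qed.
Lemma K_sum m (F : 'I_m -> C) : (forall i, K (F i)) -> K (\sum_(i < m) F i).
Proof. by move=> H; apply: (big_ind K) => //; [apply: K0|move=> a b; apply: KD]. Qed.

Definition kspan (s : seq C) (x : C) :=
  exists c : nat -> C, (forall i, K (c i)) /\ x = \sum_(i < size s) c i * s`_i.

Definition indep (s : seq C) :=
  forall c : nat -> C, (forall i, K (c i)) -> \sum_(i < size s) c i * s`_i = 0 ->
    forall i, (i < size s)%N -> c i = 0.

Definition ccons (k : C) (d : nat -> C) : nat -> C :=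
  fun i => match i with 0%N => k | j.+1 => d j end.

Lemma ccons_K k d : K k -> (forall i, K (d i)) -> forall i, K (ccons k d i).
Proof. by move=> hk hd [|i] /=. Qed.

Lemma sum_cons a s (c : nat -> C) :
  \sum_(i < size (a :: s)) c i * (a :: s)`_i = c 0%N * a + \sum_(i < size s) c i.+1 * s`_i.
Proof. by rewrite big_ord_recl /=; congr (_ + _); apply: eq_bigr => i _; rewrite lift0. Qed.

Lemma span0 s : kspan s 0.
Proof. exists (fun _ => 0); split => [i|]; first exact: K0. by rewrite big1 // => i _; rewrite mul0r. Qed.

Lemma spanD s x y : kspan s x -> kspan s y -> kspan s (x + y).
Proof.
move=> [c [hc ->]] [d [hd ->]]; exists (fun i => c i + d i); split; first by move=> i; apply: KD.
by rewrite -big_split; apply: eq_bigr => i _; rewrite mulrDl.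
Qed.

Lemma spanZ s k x : K k -> kspan s x -> kspan s (k * x).
Proof.
move=> hk [c [hc ->]]; exists (fun i => k * c i); split; first by move=> i; apply: KM.
by rewrite mulr_sumr; apply: eq_bigr => i _; rewrite mulrA.
Qed.

Lemma span_sum s (c : nat -> C) : (forall i, K (c i)) -> kspan s (\sum_(i < size s) c i * s`_i).
Proof. by move=> hc; exists c. Qed.

Lemma span_consP a s x : kspan (a :: s) x <-> exists k, K k /\ kspan s (x - k * a).
Proof.
split.
  move=> [c [hc ->]]; exists (c 0%N); split => //; rewrite sum_cons addrAC subrr add0r.
  by exists (fun i => c i.+1).
move=> [k [hk [d [hd hx]]]]; exists (ccons k d); split; first exact: ccons_K.
by rewrite sum_cons /= -hx addrC subrK.
Qed.

Lemma indep_cons a s : indep (a :: s) -> indep s /\ ~ kspan s a.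
Proof.
move=> H; split.
  move=> c hc hs i hi.
  have := H (ccons 0 c) (ccons_K K0 hc); rewrite sum_cons /= mul0r add0r => /(_ hs i.+1).
  by apply.
move=> [d [hd ha]].
have := H (ccons (-1) d) (ccons_K (KN K1) hd); rewrite sum_cons /= -ha mulN1r addNr.
move=> /(_ erefl 0%N erefl) /eqP; rewrite oppr_eq0 oner_eq0 //.
Qed.

Lemma cons_indep a s : indep s -> ~ kspan s a -> indep (a :: s).
Proof.
move=> H hna c hc; rewrite sum_cons => hs.
have c00 : c 0%N = 0.
  apply/eqP; apply/negP => /negP c0; apply: hna.
  have -> : a = (- (c 0%N)^-1) * \sum_(i < size s) c i.+1 * s`_i.
    have ha : c 0%N * a = - \sum_(i < size s) c i.+1 * s`_i.
      by apply/eqP; rewrite -addr_eq0 hs.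
    by rewrite -[a](mulKf c0) ha mulrN mulNr.
  apply: spanZ; first by apply: KN; apply: KV; apply: hc.
  by exists (fun i => c i.+1); split => // i; apply: hc.
move: hs; rewrite c00 mul0r add0r => hs.
case=> [|i] //= hi; exact: (H (fun i => c i.+1) (fun i => hc i.+1) hs i hi).
Qed.

Lemma extract (b : seq C) : exists bs, {subset bs <= b} /\ indep bs /\
  forall x, kspan b x -> kspan bs x.
Proof.
elim: b => [|a b [bs [hsub [hind hsp]]]].
  exists [::]; split => //; split => // c _ _ i //.
case: (classic (kspan bs a)) => ha.
  exists bs; split; first by move=> y /hsub hy; rewrite inE hy orbT.
  split => // x /span_consP [k [hk /hsp hx]].
  by rewrite -(subrK (k * a) x); apply: spanD => //; apply: spanZ.
exists (a :: bs); split.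
  by move=> y; rewrite !inE => /orP [->//|/hsub ->]; rewrite orbT.
split; first exact: cons_indep.
move=> x /span_consP [k [hk /hsp hx]]; apply/span_consP; by exists k.
Qed.

End Sub.


Section Equiv.
Variable C : fieldType.
Variable v : C -> rat.
Hypothesis hv : is_valuation v.
Variable K : C -> Prop.
Hypothesis hK : is_subfield K.
Hypothesis Kcomp : forall a : nat -> C, (forall i, K (a i)) -> cauchy_seq v a ->
          exists2 l, K l & converges_to v a l.

Lemma lbound (s : seq C) : exists b : rat, forall i, ge v b s`_i.
Proof.
have [M HM] : exists M : nat, forall i, (i < size s)%N -> ge v (- (M%:R)) s`_i.
  apply: (@fin_bound (fun i M => ge v (- (M%:R)) s`_i)).
  - move=> i M M' hM; apply: ge_le; by rewrite lerN2 ler_nat.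
  - move=> i hi; have [M hM] := rat_bound (- v s`_i); exists M; right; lra.
exists (- (M%:R)) => i; case: (ltnP i (size s)) => hi; first exact: HM.
by rewrite nth_default //; left.
Qed.

Definition Bound (s : seq C) (B : rat) :=
  forall c : nat -> C, (forall i, K (c i)) -> forall N : rat,
    ge v N (\sum_(i < size s) c i * s`_i) -> forall i, (i < size s)%N -> ge v (N - B) (c i).

Lemma sum_diff (s : seq C) (c d : nat -> C) :
  \sum_(i < size s) c i * s`_i - \sum_(i < size s) d i * s`_i =
  \sum_(i < size s) (c i - d i) * s`_i.
Proof. by rewrite -sumrB; apply: eq_bigr => i _; rewrite mulrBl. Qed.

Lemma coord_limit (s : seq C) B (hB : Bound s B) (Ct : nat -> nat -> C) :
  (forall t i, K (Ct t i)) ->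
  cauchy_seq v (fun t => \sum_(i < size s) Ct t i * s`_i) ->
  exists l : nat -> C, (forall i, K (l i)) /\
    converges_to v (fun t => \sum_(i < size s) Ct t i * s`_i) (\sum_(i < size s) l i * s`_i).
Proof.
move=> hCt hcau.
have hco : forall i, exists li, (i < size s)%N -> K li /\ converges_to v (fun t => Ct t i) li.
  move=> i; case: (ltnP i (size s)) => hi; last by exists 0.
  have [li hli1 hli2] : exists2 li, K li & converges_to v (fun t => Ct t i) li.
    apply: Kcomp => // N.
    have [N' hN'] := rat_bound (N%:R + B).
    have [M hM] := hcau N'; exists M => t t' ht ht'; apply/close_ge.
    have := hM t t' ht ht'; move/close_ge; rewrite sum_diff => h.
    have := hB (fun j => Ct t j - Ct t' j) (fun j => KB hK (hCt t j) (hCt t' j)) _ h i hi.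
    by apply: ge_le; lra.
  by exists li.
have [l hl] := choiceP hco.
pose l' i := if (i < size s)%N then l i else 0.
exists l'; split.
  by move=> i; rewrite /l'; case: ifP => hi; [case: (hl i hi)|apply: K0].
have -> : \sum_(i < size s) l' i * s`_i = \sum_(i < size s) l i * s`_i.
  by apply: eq_bigr => i _; rewrite /l' ltn_ord.
move=> N; have [bb hbb] := lbound s.
have [N' hN'] := rat_bound (N%:R - bb).
have [M hM] : exists M : nat, forall i, (i < size s)%N ->
    forall t, (M <= t)%N -> close v N' (Ct t i) (l i).
  apply: (@fin_bound (fun i M => forall t, (M <= t)%N -> close v N' (Ct t i) (l i))).
  - by move=> i M M' hMM' H t ht; apply: H; apply: leq_trans ht.
  - by move=> i hi; case: (hl i hi) => _ /(_ N') [M hM]; exists M.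
exists M => t ht; apply/close_ge; rewrite sum_diff; apply: (ge_sum hv) => i.
have := hM i (ltn_ord i) t ht; move/close_ge => h.
have := geM hv h (hbb i); apply: ge_le; lra.
Qed.

Lemma equiv_bound (s : seq C) : indep K s -> exists B, Bound s B.
Proof.
elim: s => [|a s IH] hind.
  by exists 0 => c _ N _ i.
have [hind' hna] := indep_cons hK hind.
have [B' hB'] := IH hind'.
have hwne : forall d : nat -> C, (forall i, K (d i)) -> a + \sum_(i < size s) d i * s`_i != 0.
  move=> d hd; apply/negP => /eqP h; apply: hna.
  exists (fun i => - d i); split; first by move=> i; apply: KN.
  have -> : a = - \sum_(i < size s) d i * s`_i by apply/eqP; rewrite -addr_eq0 h.
  by rewrite -sumrN; apply: eq_bigr => i _; rewrite mulNr.
have [D hD] : exists D, forall d : nat -> C, (forall i, K (d i)) ->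
    v (a + \sum_(i < size s) d i * s`_i) <= D.
  apply: NNPP => hno.
  have H : forall t : nat, exists d : nat -> C, (forall i, K (d i)) /\
      t%:R < v (a + \sum_(i < size s) d i * s`_i).
    move=> t; apply: NNPP => h2; apply: hno; exists t%:R => d hd.
    rewrite leNgt; apply/negP => lt; apply: h2; by exists d.
  have [Ct hCt] := choiceP H.
  have hK' : forall t i, K (Ct t i) by move=> t i; case: (hCt t).
  have hge : forall t (N : rat), N <= t%:R ->
      ge v N (a + \sum_(i < size s) Ct t i * s`_i).
    move=> t N hN; right; case: (hCt t) => _ h; apply: le_trans hN _; exact: ltW.
  have hcau : cauchy_seq v (fun t => \sum_(i < size s) Ct t i * s`_i).
    move=> N; exists N => t t' ht ht'; apply/close_ge.
    have -> : \sum_(i < size s) Ct t i * s`_i - \sum_(i < size s) Ct t' i * s`_i =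
      (a + \sum_(i < size s) Ct t i * s`_i) - (a + \sum_(i < size s) Ct t' i * s`_i).
      by rewrite opprD addrACA subrr add0r.
    by apply: (geB hv); apply: hge; rewrite ler_nat.
  have [l [hl hconv]] := coord_limit hB' hK' hcau.
  have z0 : a + \sum_(i < size s) l i * s`_i = 0.
    apply: ge_all => N.
    have [M hM] := hconv N.
    pose t := maxn N M.
    have -> : a + \sum_(i < size s) l i * s`_i =
      (a + \sum_(i < size s) Ct t i * s`_i) -
        (\sum_(i < size s) Ct t i * s`_i - \sum_(i < size s) l i * s`_i).
      by ring.
    apply: (geB hv); first by apply: hge; rewrite ler_nat leq_maxl.
    by apply/close_ge; apply: hM; apply: leq_maxr.
  by move: (hwne l hl); rewrite z0 eqxx.
exists (`|D| + `|D - v a| + `|B'|) => c hc N hx i hi.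
rewrite sum_cons in hx.
have hDle : D <= `|D| := ler_norm D.
have hB'le : B' <= `|B'| := ler_norm B'.
have hEle : 0 <= `|D - v a| := normr_ge0 _.
have hEle2 : D - v a <= `|D - v a| := ler_norm _.
have hDle0 : 0 <= `|D| := normr_ge0 _.
have hB0 : 0 <= `|B'| := normr_ge0 _.
case: (eqVneq (c 0%N) 0) => c0.
  rewrite c0 mul0r add0r in hx.
  case: i hi => [|j] hj; first by rewrite c0; left.
  have := hB' (fun j => c j.+1) (fun j => hc j.+1) _ hx j hj.
  by apply: ge_le; lra.
pose w := a + \sum_(i < size s) (c i.+1 / c 0%N) * s`_i.
have hw : w != 0 by apply: (hwne (fun i => c i.+1 / c 0%N)) => j; apply: (KM hK); [apply: hc|apply: (KV hK); apply: hc].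
have hvw : v w <= D by apply: (hD (fun i => c i.+1 / c 0%N)) => j; apply: (KM hK); [apply: hc|apply: (KV hK); apply: hc].
have hxw : c 0%N * a + \sum_(i < size s) c i.+1 * s`_i = c 0%N * w.
  rewrite /w mulrDr mulr_sumr; congr (_ + _); apply: eq_bigr => j _.
  by rewrite mulrA [c 0%N * _]mulrC divfK.
rewrite hxw in hx.
have hc0 : ge v (N - D) (c 0%N).
  case: hx => [/eqP|hx]; first by rewrite mulf_eq0 (negbTE c0) (negbTE hw).
  right; rewrite vM // in hx; lra.
case: i hi => [|j] hj; first by apply: ge_le hc0; lra.
have hy : ge v (N - `|D - v a|) (\sum_(i < size s) c i.+1 * s`_i).
  have -> : \sum_(i < size s) c i.+1 * s`_i = c 0%N * w - c 0%N * a.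
    by rewrite -hxw addrAC subrr add0r.
  apply: (geB hv); first by apply: ge_le hx; lra.
  have := geM hv hc0 (ge_v v a); apply: ge_le; lra.
have := hB' (fun j => c j.+1) (fun j => hc j.+1) _ hy j hj.
by apply: ge_le; lra.
Qed.

End Equiv.


Section Frob.
Variable C : fieldType.
Variable p : nat.
Hypothesis hp : p \in [pchar C].

Lemma pnat_pk k : [pchar C].-nat (p ^ k)%N.
Proof. by rewrite pnatX pnatE ?hp //; apply: (pcharf_prime hp). Qed.

Lemma frobD (x y : C) k : (x + y) ^+ (p ^ k) = x ^+ (p ^ k) + y ^+ (p ^ k).
Proof. by apply: exprDn_pchar; apply: pnat_pk. Qed.

Lemma frobB (x y : C) k : (x - y) ^+ (p ^ k) = x ^+ (p ^ k) - y ^+ (p ^ k).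
Proof. by rewrite frobD exprNn_pchar //; apply: pnat_pk. Qed.

Lemma frob_sum (m : nat) (F : 'I_m -> C) k :
  (\sum_(i < m) F i) ^+ (p ^ k) = \sum_(i < m) F i ^+ (p ^ k).
Proof.
elim: m F => [|m IH] F.
  rewrite !big_ord0 expr0n; case: eqP => // h; exfalso.
  by move: h => /eqP; rewrite expn_eq0 => /andP [/eqP p0 _]; move: (pcharf_prime hp); rewrite p0.
by rewrite !big_ord_recr /= frobD IH.
Qed.

End Frob.

Section Tele.
Variable C : fieldType.
Variable v : C -> rat.
Hypothesis hv : is_valuation v.

Lemma tele (a : nat -> C) M N :
  (forall t, (M <= t)%N -> ge v N (a t.+1 - a t)) ->
  forall i j, (M <= i)%N -> (M <= j)%N -> ge v N (a i - a j).
Proof.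
move=> H.
have h : forall k, ge v N (a (M + k)%N - a M).
  elim=> [|k IH]; first by rewrite addn0 subrr; left.
  rewrite addnS -(subrK (a (M + k)%N) (a (M + k).+1)) -addrA.
  by apply: (geD hv) => //; apply: H; apply: leq_addr.
move=> i j hi hj.
have -> : a i - a j = (a i - a M) - (a j - a M) by ring.
by apply: (geB hv); [rewrite -(subnKC hi)|rewrite -(subnKC hj)]; apply: h.
Qed.

Lemma ge0X x m : ge v 0 x -> ge v 0 (x ^+ m).
Proof. by move=> h; have := geX hv m h; rewrite mulr0. Qed.

End Tele.


Fixpoint yseq (C : fieldType) (w : C) (Q : nat) (t : nat) : C :=
  match t with 0%N => 1 | t'.+1 => yseq w Q t' * w ^+ (Q ^ t') end.

Section LField.
Variable C : fieldType.
Variable v : C -> rat.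
Hypothesis hv : is_valuation v.
Variable K : C -> Prop.
Hypothesis hK : is_subfield K.
Hypothesis Kcomp : forall a : nat -> C, (forall i, K (a i)) -> cauchy_seq v a ->
          exists2 l, K l & converges_to v a l.
Variable p : nat.
Hypothesis hp : p \in [pchar C].
Variable L : C -> Prop.
Hypothesis hL : is_subfield L.
Hypothesis KL : forall x, K x -> L x.
Variable bs : seq C.
Hypothesis hbsL : forall y, y \in bs -> L y.
Hypothesis hbsind : indep K bs.
Hypothesis hbsspan : forall x, L x -> kspan K bs x.

Lemma span_L x : kspan K bs x -> L x.
Proof.
move=> [c [hc ->]]; apply: (K_sum hL) => i; apply: (KM hL); first exact: KL.
by apply: hbsL; apply: mem_nth.
Qed.

Lemma L_complete (a : nat -> C) : (forall t, L (a t)) -> cauchy_seq v a ->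
  exists l, L l /\ converges_to v a l.
Proof.
move=> haL hcau.
have [B hB] := equiv_bound hv hK Kcomp hbsind.
have [Ct hCt] := choiceP (fun t => hbsspan (haL t)).
have hK' : forall t i, K (Ct t i) by move=> t i; case: (hCt t).
have ha : forall t, a t = \sum_(i < size bs) Ct t i * bs`_i by move=> t; case: (hCt t).
have hcau' : cauchy_seq v (fun t => \sum_(i < size bs) Ct t i * bs`_i).
  by move=> N; have [M hM] := hcau N; exists M => i j hi hj; rewrite -!ha; apply: hM.
have [l [hl hconv]] := coord_limit hv hK Kcomp hB hK' hcau'.
exists (\sum_(i < size bs) l i * bs`_i); split; first by apply: span_L; exists l.
by move=> N; have [M hM] := hconv N; exists M => t ht; rewrite ha; apply: hM.
Qed.

Lemma hensel (u1 : C) (N : nat) : L u1 -> (exists2 d : rat, 0 < d & ge v d (u1 - 1)) ->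
  (0 < N)%N -> ~~ (p %| N)%N -> exists r, L r /\ r ^+ N = u1.
Proof.
move=> hu1 [d d0 hd] N0 hpN.
have pr : prime p := pcharf_prime hp.
have cop : coprime p N by rewrite prime_coprime.
pose j := totient N; pose Q := (p ^ j)%N.
have Q1 : (1 <= Q)%N by rewrite expn_gt0 prime_gt0.
have QQ : (1 < Q)%N.
  rewrite /Q -(expn0 p) ltn_exp2l ?prime_gt1 //.
  by rewrite totient_gt0.
have hdiv : (N %| Q - 1)%N.
  by rewrite -eqn_mod_dvd //; apply/eqP; apply: Euler_exp_totient.
pose m1 := ((Q - 1) %/ N)%N.
have hQ : (m1 * N + 1 = Q)%N by rewrite /m1 divnK // subnK.
have frobQ : forall (x y : C) t, (x - y) ^+ (Q ^ t) = x ^+ (Q ^ t) - y ^+ (Q ^ t).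
  by move=> x y t; rewrite /Q -expnM; apply: frobB.
pose w := u1 ^+ m1.
pose y := yseq w Q.
have hu1g : ge v 0 u1.
  rewrite -(subrK 1 u1); apply: (geD hv); last exact: ge1.
  by apply: ge_le hd; apply: ltW.
have hwd : ge v d (w - 1).
  rewrite /w subrX1; rewrite -[d]addr0; apply: (geM hv) => //.
  by apply: (ge_sum hv) => i; apply: ge0X.
have hwg : ge v 0 w by apply: ge0X.
have hinv : forall t, (y t) ^+ N * u1 = u1 ^+ (Q ^ t).
  elim=> [|t IH]; first by rewrite /y /= expr1n mul1r expn0 expr1.
  rewrite /y /= -/(y t) exprMn mulrAC IH /w -!exprM -exprD.
  congr (_ ^+ _); rewrite expnS; set q := (Q ^ t)%N. by rewrite -hQ mulnDl mul1n addnC mulnAC.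
have hyg : forall t, ge v 0 (y t).
  elim=> [|t IH]; first exact: ge1.
  by rewrite /y /= -/(y t) -[0]addr0; apply: (geM hv) => //; apply: ge0X.
have hyL : forall t, L (y t).
  elim=> [|t IH]; first exact: K1 hL.
  by rewrite /y /= -/(y t); apply: (KM hL) => //; apply: (KX hL); apply: (KX hL).
have Qt : forall t, (t%:R : rat) * d <= (Q ^ t)%N%:R * d.
  move=> t; rewrite ler_pM2r // ler_nat; apply: ltnW; exact: ltn_expl.
have hpow : forall (x : C) t, ge v d (x - 1) -> ge v (t%:R * d) (x ^+ (Q ^ t) - 1).
  move=> x t h; rewrite -{1}(expr1n C (Q ^ t)) -frobQ.
  by apply: ge_le (geX hv _ h); apply: Qt.
have bnd : forall N' : nat, exists M : nat, forall t, (M <= t)%N -> (N'%:R : rat) <= t%:R * d.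
  move=> N'; have [M hM] := rat_bound (N'%:R / d); exists M => t ht.
  rewrite -ler_pdivrMr //; apply: le_trans hM _; by rewrite ler_nat.
have hcau : cauchy_seq v y.
  move=> N'; have [M hM] := bnd N'; exists M.
  move=> i1 i2 hi hj; apply/close_ge; apply: (tele hv) hi hj => t ht.
  have -> : y t.+1 - y t = y t * (w ^+ (Q ^ t) - 1) by rewrite /y /= mulrBr mulr1.
  rewrite -[N'%:R]add0r; apply: (geM hv) => //.
  by apply: ge_le (hpow _ _ hwd); apply: hM.
have [yl [hyl hconv]] := L_complete hyL hcau.
have hylg : ge v 0 yl.
  have [M0 hM0] := hconv 0%N.
  have := hM0 M0 (leqnn _); move/close_ge => h.
  rewrite -(subrK (y M0) yl); apply: (geD hv) => //.
  by rewrite -opprB; apply: (geN hv).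
have key : yl ^+ N * u1 = 1.
  apply/eqP; rewrite -subr_eq0; apply/eqP; apply: ge_all => N'.
  have [M0 hM0] := hconv N'.
  have [M1 hM1] := bnd N'.
  pose t := maxn M0 M1.
  have -> : yl ^+ N * u1 - 1 = (yl ^+ N - (y t) ^+ N) * u1 + ((y t) ^+ N * u1 - 1).
    by ring.
  apply: (geD hv).
    rewrite subrXX -[N'%:R]addr0 -[N'%:R + 0]addr0; apply: (geM hv) => //.
    apply: (geM hv); last first.
      apply: (ge_sum hv) => i; rewrite -[0]addr0; apply: (geM hv); exact: ge0X.
    rewrite -opprB; apply: (geN hv); apply/close_ge; apply: hM0; exact: leq_maxl.
  rewrite hinv; apply: ge_le (hpow _ _ hd); apply: hM1; exact: leq_maxr.
have yl0 : yl != 0.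
  apply/negP => /eqP h; move: key; rewrite h expr0n eqn0Ngt N0 /= mul0r.
  by move/eqP; rewrite eq_sym oner_eq0.
exists yl^-1; split; first exact: (KV hL hyl).
rewrite exprVn; apply: (mulfI (expf_neq0 N yl0)); rewrite key divff //.
exact: expf_neq0.
Qed.

End LField.


Section Residue.
Variable C : fieldType.
Variable v : C -> rat.
Hypothesis hv : is_valuation v.
Variable K : C -> Prop.
Hypothesis hK : is_subfield K.
Hypothesis Kcomp : forall a : nat -> C, (forall i, K (a i)) -> cauchy_seq v a ->
          exists2 l, K l & converges_to v a l.
Hypothesis hKint : forall x, K x -> x != 0 -> exists z : int, v x = z%:~R.
Variable pi : C.
Hypothesis piK : K pi.
Hypothesis pi0 : pi != 0.
Hypothesis vpi : v pi = 1.
Variable s0 : seq C.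
Hypothesis s0int : forall y, y \in s0 -> integral_in v K y.
Hypothesis s0res : forall x, integral_in v K x ->
            exists2 y, y \in s0 & (x - y = 0 \/ 0 < v (x - y)).

Lemma Kge1 x : K x -> (x = 0 \/ 0 < v x) -> ge v 1 x.
Proof.
move=> hx [->|h]; first by left.
case: (eqVneq x 0) => [->|x0]; first by left.
have [z hz] := hKint hx x0; right; move: h; rewrite hz ltr0z gtz0_ge1.
by rewrite -(ler1z rat).
Qed.

Lemma vpiX m : v (pi ^+ m) = m%:R.
Proof. by rewrite (vX hv) // vpi mulr1. Qed.

Lemma reps (R : nat) : exists A : seq C, (forall a, a \in A -> K a) /\
  forall z, K z -> ge v 0 z -> exists2 a, a \in A & ge v R%:R (z - a).
Proof.
elim: R => [|R [A [hA1 hA2]]].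
  exists [:: 0]; split; first by move=> a; rewrite inE => /eqP ->; apply: K0 hK.
  by move=> z hz hz0; exists 0; rewrite ?inE // subr0.
have piR0 : pi ^+ R != 0 by apply: expf_neq0.
exists [seq a + pi ^+ R * y | a <- A, y <- s0]; split.
  move=> a /allpairsP [[a1 y1] [/= h1 h2 ->]].
  apply: (KD hK); first exact: hA1.
  by apply: (KM hK); [apply: (KX hK)|case: (s0int h2)].
move=> z hz hz0.
have [a ha hza] := hA2 z hz hz0.
pose q := (z - a) / pi ^+ R.
have hqK : K q by apply: (KM hK); [apply: (KB hK) => //; apply: hA1|apply: (KV hK); apply: (KX hK)].
have hq : integral_in v K q.
  split => //; case: (eqVneq (z - a) 0) => [e|ne]; first by left; rewrite /q e mul0r.
  right; rewrite /q (vM hv) ?invr_eq0 // (vV hv) // vpiX.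
  case: hza => [e|h]; first by rewrite e eqxx in ne.
  lra.
have [y hy hqy] := s0res hq.
exists (a + pi ^+ R * y); first by apply: allpairs_f.
have -> : z - (a + pi ^+ R * y) = pi ^+ R * (q - y).
  by rewrite mulrBr /q mulrCA divff // mulr1; ring.
rewrite -addn1 natrD; apply: (geM hv); first by right; rewrite vpiX.
apply: Kge1 => //; apply: (KB hK) => //; by case: (s0int hy).
Qed.

Variable L : C -> Prop.
Hypothesis hL : is_subfield L.
Hypothesis KL : forall x, K x -> L x.
Variable bs : seq C.
Hypothesis hbsL : forall y, y \in bs -> L y.
Hypothesis hbsind : indep K bs.
Hypothesis hbsspan : forall x, L x -> kspan K bs x.

Lemma unit_torsion u : L u -> u != 0 -> v u = 0 ->
  exists M, (0 < M)%N /\ ge v 1 (u ^+ M - 1).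
Proof.
move=> hu u0 vu.
have [B hB] := equiv_bound hv hK Kcomp hbsind.
have [bb hbb] := lbound v bs.
have [Bn hBn] := rat_bound B.
have [bn hbn] := rat_bound (- bb).
pose R := (1 + Bn + bn)%N.
have [A [hA1 hA2]] := reps R.
pose d := size bs; pose m := size A.
have piB0 : pi ^+ Bn != 0 by apply: expf_neq0.
pose ap (f : {ffun 'I_d -> 'I_m}) := \sum_(i < d) ((pi ^+ Bn)^-1 * A`_(f i)) * bs`_i.
have happ : forall t, exists f : {ffun 'I_d -> 'I_m}, ge v 1 (u ^+ t - ap f).
  move=> t.
  have hut : L (u ^+ t) by apply: (KX hL).
  have [c [hc hct]] := hbsspan hut.
  have hutg : ge v 0 (u ^+ t) by apply: ge0X => //; right; rewrite vu.
  have hci : forall i : 'I_d, exists j : 'I_m, ge v R%:R (pi ^+ Bn * c i - A`_j).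
    move=> i.
    have hcg : ge v (- Bn%:R) (c i).
      have := hB c hc 0 (eq_ind _ (fun x => ge v 0 x) hutg _ hct) i (ltn_ord i).
      by apply: ge_le; lra.
    have hz : ge v 0 (pi ^+ Bn * c i).
      have := geM hv (ge_v v (pi ^+ Bn)) hcg; rewrite vpiX; apply: ge_le; lra.
    have [a ha haz] := hA2 _ (KM hK (KX hK _ piK) (hc i)) hz.
    have hj : (index a A < m)%N by rewrite index_mem.
    by exists (Ordinal hj); rewrite /= nth_index.
  have [g hg] := fin_all_exists hci.
  exists [ffun i => g i].
  rewrite hct /ap -sumrB; apply: (ge_sum hv) => i; rewrite ffunE -mulrBl.
  have -> : c i - (pi ^+ Bn)^-1 * A`_(g i) = (pi ^+ Bn)^-1 * (pi ^+ Bn * c i - A`_(g i)).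
    by rewrite mulrBr mulKf.
  have h1 := geM hv (geM hv (ge_v v (pi ^+ Bn)^-1) (hg i)) (hbb i).
  apply: ge_le h1; rewrite (vV hv) // vpiX /R !natrD; lra.
have [g hg] := choiceP happ.
have [t1 [t2 [ht12 hgt]]] := pigeon g.
have hd : ge v 1 (u ^+ t2 - u ^+ t1).
  have -> : u ^+ t2 - u ^+ t1 = (u ^+ t2 - ap (g t2)) - (u ^+ t1 - ap (g t1)).
    by rewrite hgt; ring.
  by apply: (geB hv).
exists (t2 - t1)%N; split; first by rewrite subn_gt0.
have ut10 : u ^+ t1 != 0 by apply: expf_neq0.
have -> : u ^+ (t2 - t1) - 1 = (u ^+ t2 - u ^+ t1) * (u ^+ t1)^-1.
  rewrite -{2}(subnKC (ltnW ht12)) exprD.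
  move: ut10; set U := u ^+ t1; set W := u ^+ (t2 - t1) => ut10.
  by field.
rewrite -[1]addr0; apply: (geM hv) => //.
by right; rewrite (vV hv) // (vX hv) // vu mulr0 oppr0.
Qed.

End Residue.


Section Insep.
Variable C : fieldType.
Variable p : nat.
Hypothesis hp : p \in [pchar C].
Variable L : C -> Prop.
Hypothesis hL : is_subfield L.
Variable b : nat.
Variable g r : C.
Hypothesis hr : L r.
Hypothesis hg : g ^+ (p ^ b) = r.

Definition L1 (y : C) := exists c : nat -> C, (forall i, L (c i)) /\
  y = \sum_(i < p ^ b) c i * g ^+ i.

Lemma P0 : (0 < p ^ b)%N.
Proof. by rewrite expn_gt0 prime_gt0 //; apply: (pcharf_prime hp). Qed.

Lemma single (a : C) j : (j < p ^ b)%N ->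
  \sum_(i < p ^ b) (if (i : nat) == j then a else 0) * g ^+ i = a * g ^+ j.
Proof.
move=> hj; rewrite (bigD1 (Ordinal hj)) //= eqxx big1 ?addr0 // => i.
by rewrite -val_eqE /= => /negbTE ->; rewrite mul0r.
Qed.

Lemma L1_single a j : L a -> (j < p ^ b)%N -> L1 (a * g ^+ j).
Proof.
move=> ha hj; exists (fun i => if i == j then a else 0); split; last by rewrite single.
by move=> i; case: ifP => _ //; apply: (K0 hL).
Qed.

Lemma L1_of_L x : L x -> L1 x.
Proof. by move=> hx; rewrite -[x]mulr1 -(expr0 g); apply: L1_single => //; apply: P0. Qed.

Lemma L1_0 : L1 0. Proof. exact: L1_of_L (K0 hL). Qed.
Lemma L1_1 : L1 1. Proof. exact: L1_of_L (K1 hL). Qed.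

Lemma L1_D x y : L1 x -> L1 y -> L1 (x + y).
Proof.
move=> [c [hc ->]] [d [hd ->]]; exists (fun i => c i + d i); split; first by move=> i; apply: (KD hL).
by rewrite -big_split; apply: eq_bigr => i _; rewrite mulrDl.
Qed.

Lemma L1_Z k x : L k -> L1 x -> L1 (k * x).
Proof.
move=> hk [c [hc ->]]; exists (fun i => k * c i); split; first by move=> i; apply: (KM hL).
by rewrite mulr_sumr; apply: eq_bigr => i _; rewrite mulrA.
Qed.

Lemma L1_sum m (F : 'I_m -> C) : (forall i, L1 (F i)) -> L1 (\sum_(i < m) F i).
Proof. by move=> H; apply: (big_ind L1) => //; [apply: L1_0|move=> x y; apply: L1_D]. Qed.

Lemma L1_mono k : L1 (g ^+ k).
Proof.
have hk : (k %% p ^ b < p ^ b)%N by rewrite ltn_pmod // P0.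
rewrite {1}(divn_eq k (p ^ b)) exprD mulnC exprM hg.
by apply: L1_single => //; apply: (KX hL).
Qed.

Lemma L1_M x y : L1 x -> L1 y -> L1 (x * y).
Proof.
move=> [c [hc ->]] [d [hd ->]]; rewrite mulr_suml; apply: L1_sum => i.
rewrite mulr_sumr; apply: L1_sum => j.
rewrite mulrACA -exprD; apply: L1_Z; [exact: (KM hL (hc i) (hd j))|exact: L1_mono].
Qed.

Lemma L1_frob x : L1 x -> L (x ^+ (p ^ b)).
Proof.
move=> [c [hc ->]]; rewrite frob_sum //; apply: (K_sum hL) => i.
rewrite exprMn -exprM mulnC exprM hg; apply: (KM hL); apply: (KX hL) => //.
Qed.

Lemma L1_X x m : L1 x -> L1 (x ^+ m).
Proof. by move=> hx; elim: m => [|m IH]; [rewrite expr0; apply: L1_1|rewrite exprS; apply: L1_M]. Qed.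

Lemma L1_V x : L1 x -> L1 x^-1.
Proof.
move=> hx; case: (eqVneq x 0) => [->|x0]; first by rewrite invr0; apply: L1_0.
have e : x^-1 = x ^+ (p ^ b).-1 * (x ^+ (p ^ b))^-1.
  rewrite -(prednK P0) exprS invfM mulrCA divff ?mulr1 //.
  by apply: expf_neq0.
rewrite e mulrC; apply: L1_Z; last exact: L1_X.
by apply: (KV hL); apply: L1_frob.
Qed.

Lemma L1_subfield : is_subfield L1.
Proof.
split; [exact: L1_0|exact: L1_1| |exact: L1_M|exact: L1_V].
move=> x y hx hy; apply: L1_D => //; rewrite -mulN1r; apply: L1_Z => //.
by apply: (KN hL); apply: (K1 hL).
Qed.

Lemma L1_finite : finite_ext L L1.
Proof.
split; [exact: L1_subfield|exact: L1_of_L|].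
exists (mkseq (fun i => g ^+ i) (p ^ b)); split.
  by move=> y /mapP [i _ ->]; apply: L1_mono.
move=> x [c [hc ->]]; exists c; split => //.
rewrite size_mkseq; apply: eq_bigr => i _; by rewrite nth_mkseq.
Qed.

Lemma L1_insep : purely_insep p L L1.
Proof. by move=> x hx; exists b; apply: L1_frob. Qed.

End Insep.


Lemma pdecomp p : prime p -> forall k m, (m <= k)%N -> (0 < m)%N ->
  exists b N, m = (p ^ b * N)%N /\ ~~ (p %| N)%N /\ (0 < N)%N.
Proof.
move=> pr; elim=> [|k IH] m hm m0.
  by move: m0; rewrite lt0n -leqn0 hm.
case: (boolP (p %| m)%N) => hpm; last by exists 0%N, m; rewrite expn0 mul1n.
have m' : (m %/ p < m)%N by rewrite ltn_Pdiv ?prime_gt1.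
have m'0 : (0 < m %/ p)%N by rewrite divn_gt0 ?prime_gt0 // dvdn_leq.
have hk : (m %/ p <= k)%N by rewrite -ltnS; apply: leq_trans m' hm.
have [b [N [e [hN N0]]]] := IH _ hk m'0.
exists b.+1, N; split => //.
by rewrite -(divnK hpm) e mulnAC -expnSr.
Qed.

Unset Implicit Arguments.

Theorem lemma2p3 (p : nat) (C : closedFieldType) (v : C -> rat) (K : C -> Prop)
  (hloc : local_setting p v K)
  (n : nat) (hn : (0 < n)%N)
  (L : C -> Prop) (hL : finite_ext K L)
  (e : nat) (he : ram_index v L e)
  (alpha : C) (halK : K alpha) (hal0 : alpha != 0)
  (hdiv : exists k : int, e%:R * v alpha = (n%:Z * k)%:~R) :
  exists L1 : C -> Prop,
    finite_ext L L1 /\ purely_insep p L L1 /\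
    exists beta : C, L1 beta /\ beta != 0 /\ pos_eq (beta ^+ n) alpha.
Proof.
case: hloc => [[pr hp0 hv hK] [hKint [pi [piK [pi0 vpi]]] Kcomp [s0 [s0int s0res]]]].
have hpc : p \in [pchar C] by rewrite inE /= pr /= hp0 eqxx.
case: hL => [hLsub KL [b [hbL hbspan]]].
have [bs [hsub [hind hsp]]] := extract hK b.
have hbsL : forall y, y \in bs -> L y by move=> y /hsub; apply: hbL.
have hbsspan : forall x, L x -> kspan K bs x by move=> x /hbspan hx; apply: hsp.
case: he => [e0 [_ [x [hxL [x0 hvx]]]]].
case: hdiv => [k hk].
have [X [hXL [X0 hXv]]] : exists X, L X /\ X != 0 /\ e%:R * v X = k%:~R.
  case: k hk => m hk.
    exists (x ^+ m); split; first exact: (KX hLsub).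
    split; first exact: expf_neq0.
    by rewrite (vX hv) // mulrCA hvx mulr1.
  exists (x ^+ m.+1)^-1; split; first by apply: (KV hLsub); apply: (KX hLsub).
  split; first by rewrite invr_eq0; apply: expf_neq0.
  by rewrite (vV hv) ?expf_neq0 // (vX hv) // NegzE intrN mulrN mulrCA hvx mulr1.
have Xn0 : X ^+ n != 0 by apply: expf_neq0.
pose u := alpha / X ^+ n.
have huL : L u by apply: (KM hLsub); [apply: KL|apply: (KV hLsub); apply: (KX hLsub)].
have u0 : u != 0 by rewrite mulf_neq0 // invr_eq0.
have vu : v u = 0.
  have h1 : v u = v alpha - n%:R * v X.
    by rewrite /u (vM hv) ?invr_eq0 // (vV hv) // (vX hv).
  have h2 : e%:R * v u = 0.
    by rewrite h1 mulrBr hk mulrCA hXv intrM; ring.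
  move: h2 => /eqP; rewrite mulf_eq0 pnatr_eq0 eqn0Ngt e0 /= => /eqP //.
have [M [M0 hM]] := unit_torsion hv hK Kcomp hKint piK pi0 vpi s0int s0res hLsub hind hbsspan huL u0 vu.
have nM0 : (0 < n * M)%N by rewrite muln_gt0 hn M0.
have [bb [N [hnM [hpN N0]]]] := @pdecomp p pr _ _ (leqnn (n * M)%N) nM0.
have [r [hrL hr]] := hensel hv hK Kcomp hpc hLsub KL hbsL hind hbsspan
   (KX hLsub M huL) (ex_intro2 _ _ 1 ltr01 hM) N0 hpN.
have P0 : (0 < p ^ bb)%N by rewrite expn_gt0 prime_gt0.
have [g hg] := solve_monicpoly (fun i => if i == 0%N then r else 0) P0.
have hg' : g ^+ (p ^ bb) = r.
  rewrite hg -(prednK P0) big_ord_recl /= expr0 mulr1 big1 ?addr0 // => i _.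
  by rewrite mul0r.
have uM0 : u ^+ M != 0 by apply: expf_neq0.
have r0 : r != 0.
  by apply/negP => /eqP h; move: hr; rewrite h expr0n eqn0Ngt N0 /= => /eqP; rewrite eq_sym (negbTE uM0).
have g0 : g != 0.
  by apply/negP => /eqP h; move: hg'; rewrite h expr0n eqn0Ngt P0 /= => /eqP; rewrite eq_sym (negbTE r0).
exists (L1 p L bb g); split; first exact: (L1_finite hpc hLsub hrL hg').
split; first exact: (L1_insep hpc hLsub hrL hg').
exists (X * g); split.
  apply: (L1_M hpc hLsub hrL hg'); first exact: L1_of_L.
  by rewrite -[g]expr1; apply: (L1_mono hpc hLsub hrL hg').
split; first by rewrite mulf_neq0.
exists M; split => //.
have ha : alpha = X ^+ n * u by rewrite /u mulrC divfK.
have -> : (X * g) ^+ n / alpha = g ^+ n / u.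
  by rewrite {1}ha exprMn invfM mulrACA divff // mul1r.
by rewrite exprMn exprVn -exprM hnM exprM hg' hr divff.
Qed.
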